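(* Let $V$ be a finite nonempty set and $f:\{0,1\}^V\to\{0,1\}^V$. The conjugate of every subnetwork of $f$ is a bijection if and only if $f$ has no even-self-dual and no odd-self-dual subnetwork.
   Context: For $x,y\in\{0,1\}^V$, $x\oplus y$ is componentwise addition mod 2, $1$ denotes the all-ones point, and $\|x\|$ is the number of components of $x$ equal to $1$; $x$ is even (odd) if $\|x\|$ is even (odd). The conjugate of a network $g$ on $W$ is $\tilde g(x)=g(x)\oplus x$. For a nonempty $I\subseteq V$ and $z\in\{0,1\}^{V\setminus I}$, the subnetwork of $f$ induced by $z$ is the network $h:\{0,1\}^I\to\{0,1\}^I$ with $h(x|_I)=f(x)|_I$ for all $x\in\{0,1\}^V$ whose restriction to $V\setminus I$ equals $z$ ($f$ is a subnetwork of itself). A network $g$ on $W$ is self-dual if $g(x\oplus 1)=g(x)\oplus 1$ for all $x$; even (odd) if $\tilde g(\{0,1\}^W)$ is exactly the set of even (odd) points of $\{0,1\}^W$; even-self-dual (odd-self-dual) if both even (odd) and self-dual. *)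

(* Defs.v *)
From mathcomp Require Import all_boot.
Set Implicit Arguments. Unset Strict Implicit. Unset Printing Implicit Defensive.

Definition point (W : finType) := {ffun W -> bool}.
Definition network (W : finType) := point W -> point W.

Definition xorp (W : finType) (x y : point W) : point W := [ffun w => x w (+) y w].
Definition ones (W : finType) : point W := [ffun _ => true].
Definition weight (W : finType) (x : point W) : nat := #|[pred w | x w]|.
Definition even_pt (W : finType) (x : point W) : bool := ~~ odd (weight x).
Definition odd_pt (W : finType) (x : point W) : bool := odd (weight x).

Definition conjugate (W : finType) (g : network W) : network W :=
  fun x => xorp (g x) x.

Definition self_dual (W : finType) (g : network W) : Prop :=
  forall x, g (xorp x (ones W)) = xorp (g x) (ones W).

Definition even_net (W : finType) (g : network W) : Prop :=
  forall y : point W, (exists x, conjugate g x = y) <-> even_pt y.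
Definition odd_net (W : finType) (g : network W) : Prop :=
  forall y : point W, (exists x, conjugate g x = y) <-> odd_pt y.

Definition even_self_dual (W : finType) (g : network W) : Prop :=
  even_net g /\ self_dual g.
Definition odd_self_dual (W : finType) (g : network W) : Prop :=
  odd_net g /\ self_dual g.

Definition elts (V : finType) (A : {set V}) : finType := {v : V | v \in A}.

(* The point x of {0,1}^V with x|_I = y and x|_{V\I} = z. *)
Definition glue (V : finType) (I : {set V}) (y : point (elts I))
  (z : point (elts (~: I))) : point V :=
  [ffun v => match @insub V (fun v => v \in I) _ v with
             | Some u => y u
             | None => match @insub V (fun v => v \in ~: I) _ v with
                       | Some u => z u
                       | None => false
                       end
             end].

Definition restr (V : finType) (I : {set V}) (x : point V) : point (elts I) :=
  [ffun u : elts I => x (val u)].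

Definition subnetwork (V : finType) (f : network V) (I : {set V})
  (z : point (elts (~: I))) : network (elts I) :=
  fun y => restr I (f (glue y z)).

(* Main.v *)
Require Import Defs.
From mathcomp Require Import all_boot.
Set Implicit Arguments. Unset Strict Implicit. Unset Printing Implicit Defensive.

Lemma weight_sum (W : finType) (x : point W) : weight x = \sum_w (x w : nat).
Proof.
rewrite /weight -sum1_card big_mkcond /=; apply: eq_bigr => w _.
by rewrite inE; case: (x w).
Qed.

Lemma odd_weight_xor (W : finType) (x y : point W) :
  odd (weight (xorp x y)) = odd (weight x) (+) odd (weight y).
Proof.
rewrite !weight_sum.
have H (F : W -> nat) : odd (\sum_w F w) = \big[addb/false]_w odd (F w).
  by apply: (big_morph odd oddD).
rewrite !H -big_split /=; apply: eq_bigr => w _.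
by rewrite ffunE; case: (x w); case: (y w).
Qed.

Definition flip (W : finType) (i : W) (y : point W) : point W :=
  [ffun w => if w == i then ~~ y w else y w].

Lemma flipK (W : finType) (i : W) : involutive (flip i).
Proof. by move=> y; apply/ffunP => w; rewrite !ffunE; case: (w == i); rewrite ?negbK. Qed.

Lemma flip_neq (W : finType) (i : W) y : flip i y != y.
Proof. apply/eqP => /ffunP /(_ i); rewrite ffunE eqxx; by case: (y i). Qed.

Lemma agree_off (W : finType) (i : W) (a y : point W) :
  (forall j, j != i -> a j = y j) -> a = y \/ a = flip i y.
Proof.
move=> H; case E: (a i == y i).
  by left; apply/ffunP => j; case: (eqVneq j i) => [->|/H //]; apply/eqP.
right; apply/ffunP => j; rewrite ffunE; case: (eqVneq j i) => [->|/H //].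
by move: E; case: (a i); case: (y i).
Qed.

Lemma agree_flip (W : finType) (i : W) (y : point W) j : j != i -> flip i y j = y j.
Proof. by rewrite ffunE => /negbTE ->. Qed.

Definition sig1 (W : finType) (x : point W) := xorp x (ones W).

Lemma sig1K (W : finType) : involutive (@sig1 W).
Proof. by move=> x; apply/ffunP => w; rewrite !ffunE; case: (x w). Qed.

Section Abstract.
Variables (W : finType) (g : point W -> point W).
Hypothesis Hinj : forall (i : W) (x x' : point W), x i = x' i -> (forall j, j != i -> g x j = g x' j) -> x = x'.
Hypothesis Hsurj : forall (i : W) (b : bool) (y : point W), exists x : point W, x i = b /\ forall j, j != i -> g x j = y j.

Definition Im (y : point W) := exists x, g x = y.
Definition Dbl (y : point W) := exists x : point W, g x = y /\ g (sig1 x) = y.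

Lemma factA (x x' : point W) : x != x' -> g x = g x' -> x' = sig1 x.
Proof.
move=> nx E; apply/ffunP => i; rewrite !ffunE addbT.
case E2: (x' i == ~~ x i); first exact/eqP.
have: x = x'.
  apply: (Hinj (i := i)); first by move: E2; case: (x i); case: (x' i).
  by move=> j _; rewrite E.
by move/eqP: nx.
Qed.

Lemma factC y i : Dbl y -> ~ Im (flip i y).
Proof.
move=> [x [E1 E2]] [x'' E3].
have Hs: sig1 x i = ~~ x i by rewrite !ffunE addbT.
have ag: forall u, g u = y -> forall j, j != i -> g x'' j = g u j.
  by move=> u Hu j hj; rewrite E3 Hu agree_flip.
case E: (x'' i == x i).
  have := Hinj (eqP E) (ag _ E1) => eq; move: E3; rewrite eq E1 => /esym.
  by move/eqP; rewrite (negbTE (flip_neq _ _)).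
have E': x'' i = sig1 x i by rewrite Hs; move: E; case: (x'' i); case: (x i).
have eq := Hinj E' (ag _ E2); move: E3; rewrite eq E2 => /esym /eqP.
by rewrite (negbTE (flip_neq _ _)).
Qed.

Lemma factD y i : ~ Im y -> Dbl (flip i y).
Proof.
move=> nI.
have get: forall b : bool, exists x : point W, x i = b /\ g x = flip i y.
  move=> b; have [x [xb ag]] := Hsurj i b y; exists x; split => //.
  by case: (agree_off ag) => // E; case: nI; exists x.
have [x0 [h0 e0]] := get false; have [x1 [h1 e1]] := get true.
exists x0; split => //.
have nx: x0 != x1 by apply/eqP => E; move: h0; rewrite E h1.
by rewrite -(factA nx); [ | rewrite e0 e1].
Qed.

Lemma parity_all y0 : Dbl y0 -> forall k y, weight (xorp y y0) = k ->
  (~~ odd k -> Dbl y) /\ (odd k -> ~ Im y).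
Proof.
move=> D0; elim=> [|k IH] y Hw.
  split=> // _; suff ->: y = y0 by [].
  apply/ffunP => w; move: Hw => /card0_eq /(_ w); rewrite !inE ffunE.
  by case: (y w); case: (y0 w).
have [i Hi]: exists i, xorp y y0 i.
  have: 0 < weight (xorp y y0) by rewrite Hw.
  by case/card_gt0P => i; rewrite inE => Hi; exists i.
have Hw': weight (xorp (flip i y) y0) = k.
  move: Hw; rewrite /weight (cardD1 i) inE Hi add1n => -[<-].
  apply: eq_card => j; rewrite !inE !ffunE; case: (eqVneq j i) => [->|_] /=.
    by move: Hi; rewrite ffunE; case: (y i); case: (y0 i).
  by [].
have [IH1 IH2] := IH _ Hw'.
rewrite /=; split.
  by rewrite negbK => ok; rewrite -(flipK i y); apply: factD; apply: IH2.
by move=> ek; rewrite -(flipK i y); apply: factC; apply: IH1.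
Qed.

Lemma abstract_main : (exists x x', x != x' /\ g x = g x') ->
  (forall x, g (sig1 x) = g x) /\
  ((forall y, Im y <-> even_pt y) \/ (forall y, Im y <-> odd_pt y)).
Proof.
move=> [x [x' [nx E]]].
have D0: Dbl (g x) by exists x; split => //; rewrite -(factA nx E) E.
have P := parity_all D0.
have ImD: forall y, Im y -> Dbl y.
  move=> y Iy; have [H1 H2] := P _ y erefl.
  by case O: (odd (weight (xorp y (g x)))); [case: (H2 O) | apply: H1; rewrite O].
have ImE: forall y, Im y <-> ~~ odd (weight (xorp y (g x))).
  move=> y; have [H1 H2] := P _ y erefl; split.
    by move=> Iy; apply/negP => O; exact: (H2 O).
  by move/H1 => [u [Hu _]]; exists u.
split.
  move=> u; have [v [Hv Hs]] := ImD (g u) (ex_intro _ u erefl).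
  have [Evu|nvu] := eqVneq v u; first by subst v.
  have Hv' : g v = g u := Hv.
  by rewrite {1}(factA nvu Hv') sig1K.
case O: (odd (weight (g x))); [right|left] => y; have := ImE y;
  rewrite odd_weight_xor O /even_pt /odd_pt; case: (odd (weight y)) => /=; case=> H1 H2;
  split => // /H1 //.
Qed.
End Abstract.

Section Conc.
Variables (V : finType) (f : network V).

Definition ev (A : {set V}) (x : point (elts A)) (v : V) : bool :=
  match insub v : option (elts A) with Some u => x u | None => false end.

Lemma evE A (x : point (elts A)) (u : elts A) : ev x (val u) = x u.
Proof. by rewrite /ev valK. Qed.

Lemma evT A (x : point (elts A)) v (Hv : v \in A) : ev x v = x (Sub v Hv).
Proof. by rewrite /ev insubT. Qed.

Lemma glueE I (y : point (elts I)) (z : point (elts (~: I))) v :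
  glue y z v = if v \in I then ev y v else ev z v.
Proof.
rewrite ffunE; case: ifP => Hv; first by rewrite /ev (insubT (fun v => v \in I) Hv).
have Hv' : v \in ~: I by rewrite inE Hv.
by rewrite (@insubF _ (fun v => v \in I) _ v Hv) /ev (insubT (fun v => v \in ~: I) Hv').
Qed.

Definition cast (A B : {set V}) (x : point (elts A)) : point (elts B) :=
  [ffun u => ev x (val u)].

Variables (I : {set V}) (z : point (elts (~: I))) (i : elts I) (b : bool).
Let J := I :\ val i.
Definition zp : point (elts (~: J)) :=
  [ffun u => if val u == val i then b else ev z (val u)].
Let g := conjugate (subnetwork f z).
Let gp := conjugate (subnetwork f zp).

Lemma JI v : v \in J -> v \in I.
Proof. by rewrite in_setD1 => /andP[]. Qed.

Lemma glue_cast (x : point (elts I)) : x i = b -> glue (cast J x) zp = glue x z.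
Proof.
move=> xb; apply/ffunP => v; rewrite !glueE.
case vJ: (v \in J).
  by rewrite (JI vJ) (evT _ vJ) ffunE.
have vJ' : v \in ~: J by rewrite inE vJ.
rewrite (evT _ vJ') ffunE /=.
case: eqP => [E|NE].
  by subst v; rewrite (valP i) evE.
have -> : v \in I = false.
  by move: vJ; rewrite in_setD1; case: (v \in I) => //; rewrite andbT => /eqP.
by [].
Qed.

Lemma conj_cast (x : point (elts I)) : x i = b -> gp (cast J x) = cast J (g x).
Proof.
move=> xb; apply/ffunP => u.
have Hu : val u \in I := JI (valP u).
rewrite /gp /g /conjugate /subnetwork /xorp /restr !ffunE glue_cast //.
by rewrite !(evT _ Hu) !ffunE SubK.
Qed.

Lemma Sub_neq (u : elts J) (Hu : val u \in I) : (Sub (val u) Hu : elts I) != i.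
Proof.
apply/eqP => E; move: (valP u); rewrite in_setD1 -E SubK eqxx //.
Qed.

Lemma slice_inj : (J != set0 -> bijective gp) -> forall x x' : point (elts I),
  x i = b -> x' i = b -> (forall j, j != i -> g x j = g x' j) -> x = x'.
Proof.
move=> Hb x x' xb x'b ag.
case: (eqVneq J set0) => [J0|nJ].
  apply/ffunP => j; case: (eqVneq j i) => [->|nji]; first by rewrite xb x'b.
  have : val j \in J by rewrite in_setD1 (valP j) andbT; apply: contra nji => /eqP /val_inj ->.
  by rewrite J0 inE.
have [h hK Kh] := Hb nJ.
have E : cast J x = cast J x'.
  apply: (can_inj hK); rewrite !conj_cast //; apply/ffunP => u; rewrite !ffunE.
  have Hu : val u \in I := JI (valP u).
  by rewrite !(evT _ Hu); apply: ag; apply: Sub_neq.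
apply/ffunP => j; case: (eqVneq j i) => [->|nji]; first by rewrite xb x'b.
have Hj : val j \in J by rewrite in_setD1 (valP j) andbT; apply: contra nji => /eqP /val_inj ->.
by move/ffunP: E => /(_ (Sub (val j) Hj)); rewrite !ffunE SubK !evE.
Qed.

Lemma slice_surj : (J != set0 -> bijective gp) -> forall y : point (elts I),
  exists x : point (elts I), x i = b /\ forall j, j != i -> g x j = y j.
Proof.
move=> Hb y.
case: (eqVneq J set0) => [J0|nJ].
  exists [ffun _ => b]; split; first by rewrite ffunE.
  move=> j nji.
  have : val j \in J by rewrite in_setD1 (valP j) andbT; apply: contra nji => /eqP /val_inj ->.
  by rewrite J0 inE.
have [h hK Kh] := Hb nJ.
pose xp := h (cast J y).
pose x : point (elts I) := [ffun j => if j == i then b else ev xp (val j)].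
have xb : x i = b by rewrite ffunE eqxx.
have Ecast : cast J x = xp.
  apply/ffunP => u; have Hu : val u \in I := JI (valP u).
  by rewrite ffunE (evT _ Hu) ffunE (negbTE (Sub_neq Hu)) SubK evE.
exists x; split => // j nji.
have Hj : val j \in J by rewrite in_setD1 (valP j) andbT; apply: contra nji => /eqP /val_inj ->.
have Eg : cast J (g x) = cast J y.
  by rewrite -conj_cast // Ecast /xp Kh.
have Ej := congr1 (fun p : point (elts J) => p (Sub (val j) Hj : elts J)) Eg; simpl in Ej; rewrite !ffunE SubK !evE in Ej; exact: Ej.
Qed.
End Conc.

Theorem corollary1 (V : finType) (HV : 0 < #|V|) (f : network V) :
  (forall (I : {set V}) (z : point (elts (~: I))),
      I != set0 -> bijective (conjugate (subnetwork f z)))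
  <->
  ~ (exists (I : {set V}) (z : point (elts (~: I))),
        I != set0 /\
        (even_self_dual (subnetwork f z) \/ odd_self_dual (subnetwork f z))).
Proof.
split.
  move=> Hall [I [z [nI Hc]]].
  have [h hK Kh] := Hall I z nI.
  have [v Hv] := set0Pn _ nI.
  pose i : elts I := Sub v Hv.
  case: Hc => [[Hev _]|[Hod _]].
    pose y : point (elts I) := [ffun w => w == i].
    have := (Hev y).1 (ex_intro _ (h y) (Kh y)); rewrite /even_pt.
    suff ->: weight y = 1 by [].
    rewrite /weight -(card1 i); apply: eq_card => w; by rewrite !inE ffunE.
  pose y : point (elts I) := [ffun w => false].
  have := (Hod y).1 (ex_intro _ (h y) (Kh y)); rewrite /odd_pt.
  suff ->: weight y = 0 by [].
  by apply: eq_card0 => w; rewrite !inE ffunE.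
move=> Hno.
suff H: forall n (I : {set V}) (z : point (elts (~: I))), #|I| <= n ->
    I != set0 -> bijective (conjugate (subnetwork f z)).
  by move=> I z; apply: (H #|I|).
elim=> [|n IH] I z HI nI.
  by move: nI; rewrite -card_gt0 lt0n; move: HI; rewrite leqn0 => ->.
set g := conjugate (subnetwork f z).
case: (boolP (injectiveb g)) => [/injectiveP inj | /injectivePn ninj].
  exact: injF_bij.
have bijJ : forall (i : elts I) b, I :\ val i != set0 ->
    bijective (conjugate (subnetwork f (zp z i b))).
  move=> i b nJ; apply: IH => //.
  move: HI; rewrite (cardsD1 (val i) I) (valP i) add1n ltnS //.
have Hinj : forall (i : elts I) (x x' : point (elts I)), x i = x' i ->
    (forall j, j != i -> g x j = g x' j) -> x = x'.
  move=> i x x' E ag; apply: (slice_inj (bijJ i (x i))) => //.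
have Hsurj : forall (i : elts I) (b : bool) (y : point (elts I)),
    exists x : point (elts I), x i = b /\ forall j, j != i -> g x j = y j.
  move=> i b y; exact: (slice_surj (bijJ i b)).
have [x [x' [nx E]]] := ninj.
have [Hsd Hpar] := abstract_main Hinj Hsurj (ex_intro _ x (ex_intro _ x' (conj nx E))).
have SD : self_dual (subnetwork f z).
  move=> u; apply/ffunP => w.
  have := congr1 (fun p : point (elts I) => p w) (Hsd u).
  rewrite /g /conjugate /sig1.
  move: (subnetwork f z (xorp u (ones (elts I)))) (subnetwork f z u) => p q.
  rewrite /xorp !ffunE.
  by case: (p w); case: (q w); case: (u w).
case: Hno; exists I, z; split => //.
by case: Hpar => H; [left|right]; split.
Qed.
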